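(* Let $[1,2,\dots,k]$ be a hierarchical-leadership flock and let $(x(t),v(t))$, $x_i,v_i\in\mathbb{R}^3$, solve for $t\ge0$ the Cucker–Smale system \[\dot x_i=v_i,\qquad \dot v_i=\sum_{j\in\mathcal{L}(i)}a_{ij}(x)(v_j-v_i),\qquad i=1,\dots,k,\] with $a_{ij}(x)=H/(1+|x_j-x_i|^2)^{\beta}$ for $j\in\mathcal{L}(i)$, where $H>0$ and $0<\beta<1/2$. Then there exists $B>0$, depending only on the initial configuration and the system parameters, such that \[\max_{1\le i,j\le k}|v_i(t)-v_j(t)|=O(e^{-Bt}),\qquad t>0.\]
   Context: A flock $[1,\dots,k]$ is under hierarchical leadership if $j\in\mathcal{L}(i)$ (agent $i$ is led by agent $j$) only if $j<i$, and every agent $i>1$ has a nonempty leader set $\mathcal{L}(i)$; agent $1$ has no leaders. *)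

(* Defs.v *)
From HB Require Import structures.
From mathcomp Require Import all_boot all_order all_algebra.
From mathcomp Require Import all_classical all_reals all_analysis.
Set Implicit Arguments. Unset Strict Implicit. Unset Printing Implicit Defensive.
Import Order.TTheory GRing.Theory Num.Theory.
Import numFieldNormedType.Exports.
Local Open Scope ring_scope.

(* Euclidean norm on R^3 (the library norm on 'rV is the max norm). *)
Definition enorm {R : realType} (u : 'rV[R]_3) : R :=
  Num.sqrt (\sum_(c < 3) (u ord0 c) ^+ 2).

(* Hierarchical leadership for agents 'I_k (agent i here = agent i+1 of the paper):
   leaders have strictly smaller index, every agent other than the first has a leader. *)
Definition hierarchical (k : nat) (L : 'I_k -> {set 'I_k}) : Prop :=
  (forall i j : 'I_k, j \in L i -> (j < i)%N) /\
  (forall i : 'I_k, (0 < i)%N -> L i != finset.set0).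

Definition cs_weight {R : realType} (H beta : R) (xi xj : 'rV[R]_3) : R :=
  H / (powR (1 + enorm (xj - xi) ^+ 2) beta).

(* Main.v *)
Require Import Defs.
From HB Require Import structures.
From mathcomp Require Import all_boot all_order all_algebra.
From mathcomp Require Import all_classical all_reals all_analysis.
From mathcomp Require Import ring lra.
Import Order.TTheory GRing.Theory Num.Theory.
Import numFieldNormedType.Exports.
Local Open Scope ring_scope.
Local Open Scope classical_set_scope.

Set Implicit Arguments. Unset Strict Implicit.

Section Aux.
Context {R : realType}.
Implicit Types (f g : R -> R) (t a b : R).
Notation wc f := {within `[(0:R), +oo[, continuous f}.

Lemma wc_comp {T : topologicalType} (f : R -> T) (g : T -> R) :
  (forall t, {for f t, continuous g}) -> wc f -> wc (fun s => g (f s)).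
Proof. move=> cg cf x; exact: continuous_comp (cf x) (cg _). Qed.

Lemma wc_cont f : continuous f -> wc f.
Proof. move=> cf; exact: continuous_subspaceT. Qed.

Lemma wcD f g : wc f -> wc g -> wc (fun s => f s + g s).
Proof. move=> cf cg x; exact: cvgD (cf x) (cg x). Qed.

Lemma wcM f g : wc f -> wc g -> wc (fun s => f s * g s).
Proof. move=> cf cg x; exact: cvgM (cf x) (cg x). Qed.

Lemma wcB f g : wc f -> wc g -> wc (fun s => f s - g s).
Proof. move=> cf cg x; exact: cvgB (cf x) (cg x). Qed.

Lemma wcC (k : R) : wc (fun _ => k).
Proof. exact: wc_cont (@cst_continuous _ _ k). Qed.

Lemma wcSum n (F : 'I_n -> R -> R) : (forall c, wc (F c)) ->
  wc (fun s => \sum_(c < n) F c s).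
Proof.
elim: n F => [|n IH] F hF.
  have -> : (fun s => \sum_(c < 0) F c s) = (fun _ => 0) by apply/funext => s; rewrite big_ord0.
  exact: wcC.
have -> : (fun s => \sum_(c < n.+1) F c s) =
   (fun s => \sum_(c < n) F (widen_ord (leqnSn n) c) s + F ord_max s).
  by apply/funext => s; rewrite big_ord_recr.
apply: wcD; last exact: hF.
exact: IH.
Qed.

Lemma wc_coord (f : R -> 'rV[R]_3) c : wc f -> wc (fun t => f t ord0 c).
Proof.
move=> cf; apply: (@wc_comp _ f (fun M : 'rV[R]_3 => M ord0 c)) => //.
move=> t; exact: coord_continuous.
Qed.

Lemma deriv_coord (f : R -> 'rV[R]_3) (t : R) (df : 'rV[R]_3) (c : 'I_3) :
  is_derive t 1 f df -> is_derive t 1 (fun s => f s ord0 c) (df ord0 c).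
Proof.
move=> [d <-]; split; first by move/derivable_mxP: d; apply.
by rewrite derive_mx // mxE.
Qed.

Lemma mono0 (F dF : R -> R) :
  (forall t : R, 0 < t -> is_derive t 1 F (dF t)) ->
  (forall t : R, 0 < t -> dF t <= 0) -> wc F ->
  forall t, 0 <= t -> F t <= F 0.
Proof.
move=> hd hle hc t t0.
apply: (@ler0_derive1_nincry R F 0) => //.
- move=> y; rewrite in_itv /= andbT => y0; by case: (hd y y0).
- move=> y; rewrite in_itv /= andbT => y0.
  rewrite derive1E; have [_ ->] := hd y y0; exact: hle.
Qed.

Lemma cont_der (F : R -> R) (dF : R) t : is_derive t 1 F (dF) -> {for t, continuous F}.
Proof. by case=> d _; apply: differentiable_continuous; apply/derivable1_diffP. Qed.

Lemma derD f g t a b : is_derive t 1 f a -> is_derive t 1 g b ->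
  is_derive t 1 (fun s => f s + g s) (a + b).
Proof. move=> ha hb; exact: is_deriveD. Qed.

Lemma derB f g t a b : is_derive t 1 f a -> is_derive t 1 g b ->
  is_derive t 1 (fun s => f s - g s) (a - b).
Proof. move=> ha hb; exact: is_deriveB. Qed.

Lemma derM f g t a b : is_derive t 1 f a -> is_derive t 1 g b ->
  is_derive t 1 (fun s => f s * g s) (f t * b + g t * a).
Proof. move=> ha hb; exact: is_deriveM. Qed.

Lemma derC (k : R) t : is_derive t 1 (fun _ : R => k) 0.
Proof. exact: is_derive_cst. Qed.

Lemma derZ (k : R) f t a : is_derive t 1 f a -> is_derive t 1 (fun s => k * f s) (k * a).
Proof. move=> ha; have := derM (derC k t) ha. by rewrite mulr0 addr0. Qed.

Lemma derSq f t a : is_derive t 1 f a -> is_derive t 1 (fun s => f s ^+ 2) (2 * f t * a).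
Proof.
move=> ha; have := derM ha ha.
have -> : f t * a + f t * a = 2 * f t * a by ring.
by have -> : (fun s => f s * f s) = (fun s => f s ^+ 2) by apply/funext => s; rewrite expr2.
Qed.

Lemma derComp (F f : R -> R) t a b : is_derive (f t) 1 F a -> is_derive t 1 f b ->
  is_derive t 1 (fun s => F (f s)) (a * b).
Proof. move=> ha hb; exact: is_derive1_comp. Qed.

Lemma derSqrt f t a : 0 < f t -> is_derive t 1 f a ->
  is_derive t 1 (fun s => Num.sqrt (f s)) ((2 * Num.sqrt (f t))^-1 * a).
Proof. move=> ft ha; exact: derComp (is_derive1_sqrt ft) ha. Qed.

Lemma derPow f (e : R) t a : 0 < f t -> is_derive t 1 f a ->
  is_derive t 1 (fun s => powR (f s) e) ((e * powR (f t) (e - 1)) * a).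
Proof. move=> ft ha; exact: derComp (is_derive1_powR e ft) ha. Qed.

Lemma derExp f t a : is_derive t 1 f a ->
  is_derive t 1 (fun s => expR (f s)) (expR (f t) * a).
Proof. move=> ha; exact: derComp (is_derive_expR _) ha. Qed.

Lemma derSum n (F : 'I_n -> R -> R) t (a : 'I_n -> R) :
  (forall c, is_derive t 1 (F c) (a c)) ->
  is_derive t 1 (fun s => \sum_(c < n) F c s) (\sum_(c < n) a c).
Proof.
move=> h; have := is_derive_sum h.
by have -> : (\sum_(i < n) F i) = (fun s => \sum_(c < n) F c s) by apply/funext => s; rewrite fct_sumE.
Qed.

Lemma derLin (B t : R) : is_derive t 1 (fun s : R => - (B * s)) (- B).
Proof.
have := is_deriveN (is_deriveZ B (is_derive_id t 1)).
by rewrite /GRing.scale /= mulr1.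
Qed.

Lemma derLinP (B t : R) : is_derive t 1 (fun s : R => B * s) B.
Proof.
have := is_deriveZ B (is_derive_id t 1).
by rewrite /GRing.scale /= mulr1.
Qed.

Lemma derEl (B t : R) :
  is_derive t 1 (fun s => expR (- (B * s))) (- B * expR (- (B * t))).
Proof. by have := derExp (derLin B t); rewrite mulrC. Qed.

Lemma derElP (B t : R) :
  is_derive t 1 (fun s => expR (B * s)) (expR (B * t) * B).
Proof. exact: derExp (derLinP B t). Qed.

Lemma contEl (B : R) : continuous (fun s => expR (- (B * s))).
Proof. move=> t; exact: cont_der (derEl B t). Qed.

Lemma contElP (B : R) : continuous (fun s => expR (B * s)).
Proof. move=> t; exact: cont_der (derElP B t). Qed.

Lemma sq_facts (w r : R) : 0 < r ->
  [/\ 0 < Num.sqrt (w ^+ 2 + r ^+ 2), Num.sqrt (w ^+ 2 + r ^+ 2) ^+ 2 = w ^+ 2 + r ^+ 2,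
      `|w| <= Num.sqrt (w ^+ 2 + r ^+ 2) & r <= Num.sqrt (w ^+ 2 + r ^+ 2)].
Proof.
move=> r0.
have hpos : 0 < w ^+ 2 + r ^+ 2.
  by apply: ltr_wpDl; [exact: sqr_ge0 | exact: exprn_gt0].
split.
- by rewrite sqrtr_gt0.
- by rewrite sqr_sqrtr // ltW.
- rewrite -sqrtr_sqr ler_sqrt; last exact: ltW.
  by rewrite lerDl sqr_ge0.
- rewrite -[r in r <= _]gtr0_norm // -sqrtr_sqr ler_sqrt; last exact: ltW.
  by rewrite lerDr sqr_ge0.
Qed.

Lemma ineq_dc (w f r a M B : R) : 0 < r -> 0 <= a -> a <= M -> 0 <= B ->
  (2 * Num.sqrt (w ^+ 2 + r ^+ 2))^-1 * (2 * w * (- a * w + f) + 2 * r * (- B * r))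
   <= - a * Num.sqrt (w ^+ 2 + r ^+ 2) + M * r + `|f|.
Proof.
move=> r0 a0 aM B0; set q := Num.sqrt _.
have [q0 q2 wq rq] := sq_facts w r0.
rewrite -/q in q0 q2 wq rq.
have wf : w * f <= `|w| * `|f| by rewrite -normrM ler_norm.
have E : (2 * q)^-1 * (2 * w * (- a * w + f) + 2 * r * (- B * r))
   = (w * (- a * w + f) - B * r ^+ 2) / q.
  by field; rewrite gt_eqF.
rewrite E ler_pdivrMr //.
have fq : `|w| * `|f| <= q * `|f| by rewrite ler_wpM2r.
have hf : 0 <= `|f| by [].
have rr : r * r <= r * q by rewrite ler_wpM2l // ltW.
have h1 : a * (r * r) <= M * (r * q).
  by apply: ler_pM => //; rewrite mulr_ge0 // ltW.
have h2 : 0 <= B * r ^+ 2 by rewrite mulr_ge0 // sqr_ge0.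
have h3 : a * q ^+ 2 = a * (w ^+ 2 + r ^+ 2) by rewrite q2.
nra.
Qed.

Lemma ineq_pc (X W : R) :
  (2 * Num.sqrt (X ^+ 2 + 1))^-1 * (2 * X * W) <= `|W|.
Proof.
set p := Num.sqrt _.
have [p0 p2 Xp _] := sq_facts X (ltr01 : (0:R) < 1).
rewrite expr1n -/p in p0 p2 Xp.
have E : (2 * p)^-1 * (2 * X * W) = X * W / p by field; rewrite gt_eqF.
rewrite E ler_pdivrMr //.
have : X * W <= `|X| * `|W| by rewrite -normrM ler_norm.
have : `|X| * `|W| <= p * `|W| by rewrite ler_wpM2r.
have : 0 <= `|W| by [].
nra.
Qed.

Lemma le_sum1 n (F : 'I_n -> R) c : (forall i, 0 <= F i) -> F c <= \sum_(i < n) F i.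
Proof.
move=> h; rewrite (bigD1 c) //= lerDl; apply: sumr_ge0 => i _; exact: h.
Qed.

Lemma wcSq f : wc f -> wc (fun s => f s ^+ 2).
Proof.
move=> cf; have -> : (fun s => f s ^+ 2) = (fun s => f s * f s) by apply/funext => s; rewrite expr2.
exact: wcM.
Qed.

Lemma div_pow_mono (H e Y0 Y : R) : 0 < H -> 0 <= e -> 0 < Y0 -> Y0 <= Y ->
  H / powR Y e <= H / powR Y0 e.
Proof.
move=> H0 e0 Y00 YY; apply: ler_wpM2l; first exact: ltW.
have Y0' : 0 < Y by apply: lt_le_trans YY.
rewrite lef_pV2 ?posrE ?powR_gt0 //.
by apply: ge0_ler_powR => //; rewrite nnegrE ltW.
Qed.

Lemma powR_inv_bound (Y g Z : R) : 0 < g -> 0 <= Y -> powR Y g <= Z -> Y <= powR Z g^-1.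
Proof.
move=> g0 Y0 h.
have -> : Y = powR (powR Y g) g^-1 by rewrite -powRrM mulfV ?gt_eqF // powRr1.
apply: ge0_ler_powR => //; first by rewrite invr_ge0 ltW.
- by rewrite nnegrE powR_ge0.
- by rewrite nnegrE (le_trans (powR_ge0 _ _) h).
Qed.

End Aux.

Section CoreSec.
Context {R : realType}.
Notation wc f := {within `[(0:R), +oo[, continuous f}.

Lemma core (H beta M G B D : R) (W X f : 'I_3 -> R -> R) (A : R -> R) :
  0 < H -> 0 < beta -> beta < 1/2 -> 0 < B -> 0 <= M -> 0 <= G -> 0 <= D ->
  (forall c, wc (W c)) -> (forall c, wc (X c)) ->
  (forall c (t : R), 0 < t -> is_derive t 1 (X c) (W c t)) ->
  (forall c (t : R), 0 < t -> is_derive t 1 (W c) (- A t * W c t + f c t)) ->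
  (forall t, 0 < t -> A t <= M) ->
  (forall c t, 0 < t -> `|f c t| <= G * expR (- (B * t))) ->
  (forall t, 0 < t -> H / powR (1 + D + \sum_(c < 3) `|X c t|) (2 * beta) <= A t) ->
  exists B', 0 < B' /\ exists C' D', forall t, 0 < t -> forall c,
     `|W c t| <= C' * expR (- (B' * t)) /\ `|X c t| <= D'.
Proof.
move=> H0 b0 b12 B0 M0 G0 D0 cW cX dX dW AM fG Alow.
pose rho t := expR (- (B * t)).
have rho0 (t : R) : 0 < rho t by apply: expR_gt0.
pose q c t := Num.sqrt (W c t ^+ 2 + rho t ^+ 2).
pose p c t := Num.sqrt (X c t ^+ 2 + 1).
pose d t := \sum_(c < 3) q c t.
pose s t := \sum_(c < 3) p c t.
pose g := 1 - 2 * beta.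
have g0 : 0 < g by rewrite /g subr_gt0; lra.
pose G2 := (M + G) *+ 3.
have G20 : 0 <= G2 by rewrite /G2 mulrn_wge0 // addr_ge0.
pose dq c t := (2 * q c t)^-1 * (2 * W c t * (- A t * W c t + f c t) + 2 * rho t * (- B * rho t)).
pose dp c t := (2 * p c t)^-1 * (2 * X c t * W c t).
have A0 (t : R) : 0 < t -> 0 <= A t.
  by move=> t0; apply: le_trans (Alow t t0); rewrite divr_ge0 // ?powR_ge0 // ltW.
have qf c (t : R) : [/\ 0 < q c t, q c t ^+ 2 = W c t ^+ 2 + rho t ^+ 2, `|W c t| <= q c t & rho t <= q c t].
  exact: sq_facts.
have pf c (t : R) : [/\ 0 < p c t, p c t ^+ 2 = X c t ^+ 2 + 1 ^+ 2, `|X c t| <= p c t & 1 <= p c t].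
  have := sq_facts (X c t) (ltr01 : (0:R) < 1); by rewrite /p expr1n.
have hdq c (t : R) : 0 < t -> is_derive t 1 (q c) (dq c t).
  move=> t0; apply: derSqrt.
    by apply: ltr_wpDl; [exact: sqr_ge0 | exact: exprn_gt0].
  by apply: derD; [exact: derSq (dW c t t0) | exact: derSq (derEl B t)].
have dq_le c (t : R) : 0 < t -> dq c t <= - A t * q c t + (M + G) * rho t.
  move=> t0; apply: le_trans (ineq_dc (W c t) (f c t) (rho0 t) (A0 t t0) (AM t t0) (ltW B0)) _.
  rewrite -addrA lerD2l mulrDl lerD2l; exact: fG.
have hdp c (t : R) : 0 < t -> is_derive t 1 (p c) (dp c t).
  move=> t0; have h := derD (derSq (dX c t t0)) (derC 1 t); rewrite addr0 in h.
  apply: (derSqrt _ h).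
  by apply: ltr_wpDl; [exact: sqr_ge0 | exact: ltr01].
have dp_le c (t : R) : dp c t <= q c t.
  apply: le_trans (ineq_pc _ _) _; by have [] := qf c t.
have s_pos (t : R) : 0 < 1 + D + s t.
  apply: ltr_wpDr; last by lra.
  by apply: sumr_ge0 => c _; have [/ltW] := pf c t.
have d_ge0 (t : R) : 0 <= d t by apply: sumr_ge0 => c _; have [/ltW] := qf c t.
have sdq (t : R) : 0 < t -> \sum_(c < 3) dq c t <= - A t * d t + G2 * rho t.
  move=> t0; apply: le_trans (ler_sum _ (fun c _ => dq_le c t t0)) _.
  by rewrite big_split /= -mulr_sumr sumr_const card_ord /G2 mulrnAl.
have sdp (t : R) : \sum_(c < 3) dp c t <= d t by apply: ler_sum => c _; exact: dp_le.
have sXs (t : R) : \sum_(c < 3) `|X c t| <= s t by apply: ler_sum => c _; have [] := pf c t.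
pose Lyp t := d t + H / g * powR (1 + D + s t) g + (G2 / B) * rho t.
pose dL t := \sum_(c < 3) dq c t + H / g * ((g * powR (1 + D + s t) (g - 1)) * (0 + \sum_(c < 3) dp c t))
   + G2 / B * (- B * rho t).
have hdL (t : R) : 0 < t -> is_derive t 1 Lyp (dL t).
  move=> t0.
  exact: derD (derD (derSum (fun c => hdq c t t0))
     (derZ _ (derPow (f := fun s0 => 1 + D + s s0) _ (s_pos t) (derD (derC _ t) (derSum (fun c => hdp c t t0))))))
     (derZ _ (derEl B t)).
have dL_le (t : R) : 0 < t -> dL t <= 0.
  move=> t0; rewrite /dL.
  set P := powR (1 + D + s t) (g - 1).
  have E1 : H / g * (g * P * (0 + \sum_(c < 3) dp c t)) = (H * P) * \sum_(c < 3) dp c t.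
    by rewrite add0r; field; rewrite gt_eqF.
  have E2 : G2 / B * (- B * rho t) = - (G2 * rho t) by field; rewrite gt_eqF.
  rewrite E1 E2.
  have HP0 : 0 <= H * P by rewrite mulr_ge0 ?powR_ge0 // ltW.
  have HPA : H * P <= A t.
    apply: le_trans (Alow t t0).
    rewrite /P (_ : g - 1 = - (2 * beta)); last by rewrite /g; ring.
    rewrite powRN; apply: div_pow_mono => //; first by rewrite mulr_ge0 // ltW.
      by apply: ltr_wpDr; [exact: sumr_ge0 | lra].
    by rewrite lerD2l.
  have h1 : (H * P) * \sum_(c < 3) dp c t <= (H * P) * d t by rewrite ler_wpM2l.
  have h2 : (H * P) * d t <= A t * d t by rewrite ler_wpM2r.
  have h3 := sdq t t0.
  lra.
have cq c : wc (q c).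
  apply: (wc_comp (f := fun s => W c s ^+ 2 + rho s ^+ 2) (g := Num.sqrt)).
    by move=> ?; exact: sqrt_continuous.
  apply: wcD; [exact: wcSq (cW c) | apply: wcSq; apply: wc_cont; exact: contEl].
have cp c : wc (p c).
  apply: (wc_comp (f := fun s => X c s ^+ 2 + 1) (g := Num.sqrt)).
    by move=> ?; exact: sqrt_continuous.
  by apply: wcD; [exact: wcSq | exact: wcC].
have cd : wc d by apply: wcSum.
have cs : wc s by apply: wcSum.
have cL : wc Lyp.
  apply: wcD; [apply: wcD => //|]; last by apply: wcM; [exact: wcC | apply: wc_cont; exact: contEl].
  apply: wcM; first exact: wcC.
  apply: (wc_comp (f := fun s0 => 1 + D + s s0) (g := fun y => powR y g)).
    by move=> t; apply: cont_der; exact: is_derive1_powR (s_pos t).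
  by apply: wcD => //; exact: wcC.
have Lmono := mono0 hdL dL_le cL.
pose S := powR (Lyp 0 * g / H) g^-1.
have sS (t : R) : 0 < t -> s t <= S.
  move=> t0.
  have h1 : H / g * powR (1 + D + s t) g <= Lyp 0.
    apply: le_trans (Lmono t (ltW t0)); rewrite /Lyp.
    have := d_ge0 t.
    have : 0 <= G2 / B * rho t by rewrite mulr_ge0 ?divr_ge0 // ltW.
    lra.
  have h : powR (1 + D + s t) g <= Lyp 0 * g / H.
    rewrite ler_pdivlMr //.
    have := ler_wpM2r (ltW g0) h1.
    have -> : H / g * powR (1 + D + s t) g * g = powR (1 + D + s t) g * H.
      by field; rewrite gt_eqF.
    by [].
  apply: le_trans (powR_inv_bound g0 (ltW (s_pos t)) h).
  by rewrite lerDr; lra.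
have DS0 : 0 < 1 + D + S by rewrite /S; have := powR_ge0 (Lyp 0 * g / H) g^-1; lra.
pose a0 := H / powR (1 + D + S) (2 * beta).
have a00 : 0 < a0 by rewrite divr_gt0 // powR_gt0.
have a0A (t : R) : 0 < t -> a0 <= A t.
  move=> t0; apply: le_trans (Alow t t0); apply: div_pow_mono => //.
  - by rewrite mulr_ge0 // ltW.
  - by apply: ltr_wpDr; [apply: sumr_ge0 => c _; exact: normr_ge0 | lra].
  - by rewrite lerD2l; exact: le_trans (sXs t) (sS t t0).
pose lam := Num.min a0 B / 2.
have m0 : 0 < Num.min a0 B by rewrite lt_min a00 B0.
have ma : Num.min a0 B <= a0 by rewrite ge_min lexx.
have mB : Num.min a0 B <= B by rewrite ge_min lexx orbT.
have lam0 : 0 < lam by rewrite /lam; lra.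
have lama : lam <= a0 by rewrite /lam; lra.
have lamB : lam * 2 <= B by rewrite /lam; lra.
pose Y t := expR (lam * t) * d t + G2 / lam * expR (- (lam * t)).
pose dY t := expR (lam * t) * \sum_(c < 3) dq c t + d t * (expR (lam * t) * lam)
   + G2 / lam * (- lam * expR (- (lam * t))).
have hdY (t : R) : 0 < t -> is_derive t 1 Y (dY t).
  move=> t0.
  exact: derD (derM (derElP lam t) (derSum (fun c => hdq c t t0))) (derZ _ (derEl lam t)).
have dY_le (t : R) : 0 < t -> dY t <= 0.
  move=> t0; rewrite /dY.
  set E := expR (lam * t); set E' := expR (- (lam * t)).
  have E0 : 0 < E by apply: expR_gt0.
  have h1 : E * \sum_(c < 3) dq c t <= E * (- A t * d t + G2 * rho t).
    by apply: ler_wpM2l; [exact: ltW | exact: sdq t t0].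
  have h2 : E * rho t <= E'.
    rewrite /E /rho /E' -expRD ler_expR.
    have := ler_wpM2r (ltW t0) lamB; lra.
  have h3 : 0 <= (E * d t) * (A t - lam).
    apply: mulr_ge0; first by apply: mulr_ge0; [exact: ltW | exact: d_ge0].
    by rewrite subr_ge0; exact: le_trans lama (a0A t t0).
  have h4 : G2 * (E * rho t) <= G2 * E' by rewrite ler_wpM2l.
  have E2 : G2 / lam * (- lam * E') = - (G2 * E') by field; rewrite gt_eqF.
  rewrite E2; lra.
have cY : wc Y.
  apply: wcD; apply: wcM.
  - by apply: wc_cont; exact: contElP.
  - exact: cd.
  - exact: wcC.
  - by apply: wc_cont; exact: contEl.
have Ymono := mono0 hdY dY_le cY.
exists lam; split => //.
exists (Y 0), S => t t0 c; split.
- have [_ _ hq _] := qf c t.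
  have qd : q c t <= d t by apply: le_sum1 => i; have [/ltW] := qf i t.
  have hY := Ymono t (ltW t0).
  have hE : expR (lam * t) * d t <= Y 0.
    apply: le_trans hY; rewrite /Y lerDl mulr_ge0 ?divr_ge0 ?expR_ge0 //; exact: ltW.
  apply: (le_trans hq); apply: (le_trans qd).
  by rewrite expRN ler_pdivlMr ?expR_gt0 // mulrC.
- have [_ _ hp _] := pf c t.
  have ps : p c t <= s t by apply: le_sum1 => i; have [/ltW] := pf i t.
  exact: le_trans hp (le_trans ps (sS t t0)).
Qed.

End CoreSec.

Section H3.
Context {R : realType}.

Lemma sum_sq_le n (z : 'I_n -> R) : (forall i, 0 <= z i) ->
  \sum_(i < n) z i ^+ 2 <= (\sum_(i < n) z i) ^+ 2.
Proof.
elim: n z => [|n IH] z hz; first by rewrite !big_ord0 expr0n.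
rewrite !big_ord_recr /=.
have h := IH (fun i => z (widen_ord (leqnSn n) i)) (fun i => hz _).
have S0 : 0 <= \sum_(i < n) z (widen_ord (leqnSn n) i) by apply: sumr_ge0 => i _.
have := hz ord_max.
nra.
Qed.

Lemma enorm_sq (u : 'rV[R]_3) : enorm u ^+ 2 = \sum_(c < 3) u ord0 c ^+ 2.
Proof. by rewrite /enorm sqr_sqrtr // sumr_ge0 // => c _; exact: sqr_ge0. Qed.

Lemma enorm_le (u : 'rV[R]_3) : enorm u <= \sum_(c < 3) `|u ord0 c|.
Proof.
have S0 : 0 <= \sum_(c < 3) `|u ord0 c| by apply: sumr_ge0.
rewrite /enorm -[X in _ <= X]ger0_norm // -sqrtr_sqr ler_sqrt ?sqr_ge0 //.
have -> : \sum_(c < 3) u ord0 c ^+ 2 = \sum_(c < 3) `|u ord0 c| ^+ 2.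
  by apply: eq_bigr => c _; rewrite real_normK // num_real.
exact: sum_sq_le.
Qed.

Lemma derEq (F : R -> R) (t a b : R) : is_derive t 1 F a -> a = b -> is_derive t 1 F b.
Proof. by move=> h <-. Qed.

Lemma weight_gt0 (H beta : R) (xi xj : 'rV[R]_3) : 0 < H -> 0 < cs_weight H beta xi xj.
Proof.
move=> H0; rewrite /cs_weight divr_gt0 // powR_gt0 //.
by apply: ltr_wpDr; [exact: sqr_ge0 | exact: ltr01].
Qed.

Lemma weight_le (H beta : R) (xi xj : 'rV[R]_3) : 0 < H -> 0 <= beta ->
  cs_weight H beta xi xj <= H.
Proof.
move=> H0 b0; rewrite /cs_weight.
set e := 1 + _.
have e1 : 1 <= e by rewrite /e lerDl sqr_ge0.
have P1 : 1 <= powR e beta.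
  have := ge0_ler_powR b0 (_ : 1 \in Num.nneg) (_ : e \in Num.nneg) e1.
  rewrite powR1; apply; rewrite nnegrE //; exact: le_trans e1.
have P0 : 0 < powR e beta by apply: lt_le_trans P1.
by rewrite ler_pdivrMr // ler_peMr // ltW.
Qed.

Lemma weight_lower (H beta Y : R) (xi xj : 'rV[R]_3) : 0 < H -> 0 <= beta -> 0 <= Y ->
  1 + enorm (xj - xi) ^+ 2 <= Y ^+ 2 ->
  H / powR Y (2 * beta) <= cs_weight H beta xi xj.
Proof.
move=> H0 b0 Y0 hY; rewrite /cs_weight powRrM powR_mulrn //.
apply: div_pow_mono => //.
by apply: ltr_wpDr; [exact: sqr_ge0 | exact: ltr01].
Qed.

Lemma bound_mono (C Cm B Bm t : R) : 0 <= Cm -> C <= Cm -> Bm <= B -> 0 < t ->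
  C * expR (- (B * t)) <= Cm * expR (- (Bm * t)).
Proof.
move=> Cm0 CC BB t0.
apply: le_trans (_ : Cm * expR (- (B * t)) <= _).
  by apply: ler_wpM2r => //; exact: expR_ge0.
apply: ler_wpM2l => //; rewrite ler_expR lerN2.
by apply: ler_wpM2r => //; exact: ltW.
Qed.

End H3.

Unset Implicit Arguments. Set Strict Implicit.

Theorem theorem5 (R : realType) (k : nat) (L : 'I_k -> {set 'I_k})
  (H beta : R) (x v : 'I_k -> R -> 'rV[R]_3) :
  hierarchical L ->
  0 < H -> 0 < beta -> beta < 1 / 2 ->
  (forall i, {within `[0, +oo[, continuous (x i)}) ->
  (forall i, {within `[0, +oo[, continuous (v i)}) ->
  (forall i (t : R), 0 < t -> is_derive t 1 (x i) (v i t)) ->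
  (forall i (t : R), 0 < t ->
     is_derive t 1 (v i)
       (\sum_(j in L i) cs_weight H beta (x i t) (x j t) *: (v j t - v i t))) ->
  exists B : R, 0 < B /\
    exists C : R, forall t : R, 0 < t ->
      forall i j : 'I_k, enorm (v i t - v j t) <= C * expR (- (B * t)).
Proof.
move=> [hL1 hL2] H0 b0 b12 cx cv dx dv.
case: k L x v hL1 hL2 cx cv dx dv => [|n] L x v hL1 hL2 cx cv dx dv.
  by exists 1; split => //; exists 0 => t t0 [].
pose i0 : 'I_n.+1 := ord0.
have L0 j : (j \in L i0) = false.
  by apply/negbTE/negP => /hL1; rewrite ltn0.
have dv0 c (t : R) : 0 < t -> is_derive t 1 (fun s => v i0 s ord0 c) 0.
  move=> t0; have := deriv_coord c (dv i0 t t0).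
  by rewrite big_pred0 // mxE.
pose Inv m := exists B : R, 0 < B /\ exists C D : R, 0 <= C /\ 0 <= D /\
  forall j : 'I_n.+1, (j < m)%N -> forall t : R, 0 < t -> forall c,
    `|v j t ord0 c - v i0 t ord0 c| <= C * expR (- (B * t)) /\
    `|x j t ord0 c - x i0 t ord0 c| <= D.
have inv1 : Inv 1%N.
  exists 1; split => //; exists 0, 0; do 2 split => //.
  move=> j; rewrite ltnS leqn0 => /eqP j0 t t0 c.
  have -> : j = i0 by apply: val_inj.
  by rewrite !subrr normr0 mul0r.
have step m : (0 < m)%N -> (m < n.+1)%N -> Inv m -> Inv m.+1.
  move=> m0 mk [B [B0 [C [D [C0 [D0 hI]]]]]].
  pose i : 'I_n.+1 := Ordinal mk.
  have Li j : j \in L i -> (j < m)%N by move/hL1.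
  have [j0 j0L] : exists j0, j0 \in L i by apply/set0Pn; apply: hL2.
  pose a j t := cs_weight H beta (x i t) (x j t).
  have a0 j t : 0 < a j t by apply: weight_gt0.
  pose A t := \sum_(j in L i) a j t.
  pose W c t := v i t ord0 c - v i0 t ord0 c.
  pose X c t := x i t ord0 c - x i0 t ord0 c.
  pose f c t := \sum_(j in L i) a j t * (v j t ord0 c - v i0 t ord0 c).
  pose M := H *+ #|L i|.
  pose G := (H * C) *+ #|L i|.
  pose D3 := D *+ 3.
  have M0 : 0 <= M by apply: mulrn_wge0; exact: ltW.
  have G0 : 0 <= G by apply: mulrn_wge0; apply: mulr_ge0 => //; exact: ltW.
  have D30 : 0 <= D3 by apply: mulrn_wge0.
  have cW c : {within `[(0:R), +oo[, continuous (W c)}.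
    by apply: wcB; apply: wc_coord.
  have cX c : {within `[(0:R), +oo[, continuous (X c)}.
    by apply: wcB; apply: wc_coord.
  have dX c (t : R) : 0 < t -> is_derive t 1 (X c) (W c t).
    move=> t0; exact: derB (deriv_coord c (dx i t t0)) (deriv_coord c (dx i0 t t0)).
  have dW c (t : R) : 0 < t -> is_derive t 1 (W c) (- A t * W c t + f c t).
    move=> t0; apply: derEq (derB (deriv_coord c (dv i t t0)) (dv0 c t t0)) _.
    rewrite summxE; under eq_bigr do rewrite !mxE.
    rewrite /A /f /W subr0 mulNr mulr_suml -sumrN -big_split /=.
    by apply: eq_bigr => j _; rewrite /a; ring.
  have AM (t : R) : 0 < t -> A t <= M.
    move=> t0; rewrite /A /M -sumr_const; apply: ler_sum => j _.
    exact: weight_le (ltW b0).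
  have fG c (t : R) : 0 < t -> `|f c t| <= G * expR (- (B * t)).
    move=> t0; apply: le_trans (ler_norm_sum _ _ _) _.
    rewrite /G mulrnAl -sumr_const; apply: ler_sum => j jL.
    rewrite normrM (ger0_norm (ltW (a0 j t))) -mulrA.
    apply: ler_pM => //; first exact: ltW.
    - exact: weight_le (ltW b0).
    - by have [] := hI j (Li j jL) t t0 c.
  have Alow (t : R) : 0 < t ->
      H / powR (1 + D3 + \sum_(c < 3) `|X c t|) (2 * beta) <= A t.
    move=> t0.
    have aA : a j0 t <= A t.
      rewrite /A (bigD1 j0) //= lerDl; apply: sumr_ge0 => j _; exact: ltW.
    apply: le_trans aA.
    have Xs0 : 0 <= \sum_(c < 3) `|X c t| by apply: sumr_ge0.
    apply: weight_lower (ltW b0) _ _ => //; first by lra.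
    rewrite enorm_sq.
    pose z c := D + `|X c t|.
    have hz c : (x j0 t - x i t) ord0 c ^+ 2 <= z c ^+ 2.
      rewrite !mxE -real_normK ?num_real //.
      have hu : `|x j0 t ord0 c - x i t ord0 c| <= z c.
        have -> : x j0 t ord0 c - x i t ord0 c =
          (x j0 t ord0 c - x i0 t ord0 c) - X c t by rewrite /X; ring.
        apply: le_trans (ler_normB _ _) _; rewrite lerD2r.
        by have [] := hI j0 (Li j0 j0L) t t0 c.
      have u0 := normr_ge0 (x j0 t ord0 c - x i t ord0 c); nra.
    have hsum : \sum_(c < 3) (x j0 t - x i t) ord0 c ^+ 2 <= (\sum_(c < 3) z c) ^+ 2.
      apply: le_trans (ler_sum _ (fun c _ => hz c)) _.
      by apply: sum_sq_le => c; rewrite /z addr_ge0.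
    have Ez : \sum_(c < 3) z c = D3 + \sum_(c < 3) `|X c t|.
      by rewrite /z big_split /= sumr_const card_ord.
    rewrite Ez in hsum; move: hsum; set T := D3 + _ => hsum.
    have T0 : 0 <= T by rewrite /T addr_ge0.
    rewrite -addrA -/T; nra.
  have [B' [B'0 [C' [D' hC]]]] := core H0 b0 b12 B0 M0 G0 D30 cW cX dX dW AM fG Alow.
  exists (Num.min B B'); split; first by rewrite lt_min B0 B'0.
  exists (Num.max C C'), (Num.max D D'); split; first by rewrite le_max C0.
  split; first by rewrite le_max D0.
  have mB : Num.min B B' <= B by rewrite ge_min lexx.
  have mB' : Num.min B B' <= B' by rewrite ge_min lexx orbT.
  have MC : 0 <= Num.max C C' by rewrite le_max C0.
  move=> j jm t t0 c.
  case: (ltnP j m) => hj.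
    have [h1 h2] := hI j hj t t0 c; split.
    - by apply: le_trans h1 (bound_mono _ _ mB t0) => //; rewrite le_max lexx.
    - by apply: le_trans h2 _; rewrite le_max lexx.
  have -> : j = i by apply: val_inj => /=; apply/eqP; rewrite eqn_leq hj -ltnS jm.
  have [h1 h2] := hC t t0 c; split.
  - by apply: le_trans h1 (bound_mono _ _ mB' t0) => //; rewrite le_max lexx orbT.
  - by apply: le_trans h2 _; rewrite le_max lexx orbT.
have invall m : (m <= n)%N -> Inv m.+1.
  elim: m => [|m IH] hm; first exact: inv1.
  by apply: step => //; apply: IH; exact: ltnW.
have [B [B0 [C [D [C0 [D0 hI]]]]]] := invall n (leqnn n).
exists B; split => //; exists (C *+ 6) => t t0 i j.
apply: le_trans (enorm_le _) _.
set e := expR (- (B * t)).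
apply: le_trans (_ : _ <= \sum_(c < 3) (C * e + C * e)) _.
  apply: ler_sum => c _; rewrite !mxE.
  have -> : v i t ord0 c - v j t ord0 c =
    (v i t ord0 c - v i0 t ord0 c) - (v j t ord0 c - v i0 t ord0 c) by ring.
  apply: le_trans (ler_normB _ _) _.
  apply: lerD.
  - by have [] := hI i (ltn_ord i) t t0 c.
  - by have [] := hI j (ltn_ord j) t t0 c.
by rewrite sumr_const card_ord -mulr2n -mulrnA mulrnAl.
Qed.
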